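(* Let $B$ be an nbc basis of $M$ with $|\mathrm{IA}(B)|=k+1$. Write $B-\mathrm{IA}(B)=\{e_1>\cdots>e_{r-k}\}$ and $(E-B)-\min(E-B)=\{e_{r-k+1}<\cdots<e_{n-k-1}\}$. Define pairs $F_j|G_j$ for $1\le j\le n-k-1$ by \[ F_j|G_j=\begin{cases}\mathrm{cl}\{e_1,\dots,e_j\}\,|\,E & 1\le j\le r-k,\\ E\,|\,\mathrm{cl}^\perp\{e_j,e_{j+1},\dots,e_{n-k-1}\} & r-k+1\le j\le n-k-1.\end{cases} \] Then $\{F_1|G_1,\dots,F_{n-k-1}|G_{n-k-1}\}$ is a biflag of $M$ (the nbc biflag $\mathcal F(B)|\mathcal G(B)$).
   Context: Let $M$ be a matroid with no loops and no coloops on the ground set $E=\{0,1,\dots,n\}$, totally ordered by the usual order of integers, of rank $r+1$; its dual $M^\perp$ has rank $n-r$. Write $\mathrm{cl}$, $\mathrm{cl}^\perp$ for the closure operators of $M$, $M^\perp$. A biflat of $M$ is a pair $F|G$ where $F$ is a flat of $M$, $G$ is a flat of $M^\perp$, both are nonempty, they are not both equal to $E$, and $F\cup G=E$. Two biflats $F|G$, $F'|G'$ are compatible if ($F\subseteq F'$ and $G\supseteq G'$) or ($F\supseteq F'$ and $G\subseteq G'$). A biflag is a set of pairwise compatible biflats with $\bigcup_{F|G}(F\cap G)\neq E$. For a basis $B$ and $i\in B$, $C^\perp(B,i)$ is the unique cocircuit of $M$ contained in $(E-B)\cup i$ and containing $i$; for $i\notin B$, $C(B,i)$ is the unique circuit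 contained in $B\cup i$ and containing $i$. $\mathrm{IA}(B)=\{i\in B: i=\min C^\perp(B,i)\}$, $\mathrm{EA}(B)=\{i\notin B: i=\min C(B,i)\}$. $B$ is an nbc basis if $\mathrm{EA}(B)=\emptyset$. *)

(* Defs.v *)
(* Matroids on the ground set E = 'I_N (= {0,...,N-1}),
   given by their family of bases. *)
From mathcomp Require Import all_boot all_order.
Set Implicit Arguments. Unset Strict Implicit. Unset Printing Implicit Defensive.

Section Matroid.
Variable N : nat.
Local Notation T := 'I_N.
Implicit Types (Bs : {set {set T}}) (X Y B C I : {set T}).

Definition is_matroid Bs : Prop :=
  Bs != set0 /\
  forall B1 B2, B1 \in Bs -> B2 \in Bs -> forall x, x \in B1 :\: B2 ->
    exists2 y, y \in B2 :\: B1 & (y |: (B1 :\ x)) \in Bs.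

Definition dualB Bs : {set {set T}} := [set ~: B | B in Bs].

Definition indep Bs I : bool := [exists B in Bs, I \subset B].

Definition rank Bs X : nat := \max_(I : {set T} | indep Bs I && (I \subset X)) #|I|.

Definition cl Bs X : {set T} := [set e | rank Bs (e |: X) == rank Bs X].

Definition flat Bs F : bool := cl Bs F == F.

Definition is_loop Bs (e : T) : bool := [forall B in Bs, e \notin B].
Definition is_coloop Bs (e : T) : bool := [forall B in Bs, e \in B].

Definition circuit Bs C : bool :=
  ~~ indep Bs C && [forall D : {set T}, (D \proper C) ==> indep Bs D].
Definition cocircuit Bs C : bool := circuit (dualB Bs) C.

(* C(B,i), i \notin B : the unique circuit contained in B u i containing i *)
Definition fundCircuit Bs B (i : T) : {set T} :=
  odflt set0 [pick C | circuit Bs C && (C \subset i |: B) && (i \in C)].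
(* C^perp(B,i), i \in B : the unique cocircuit contained in (E-B) u i containing i *)
Definition fundCocircuit Bs B (i : T) : {set T} :=
  odflt set0 [pick C | cocircuit Bs C && (C \subset i |: ~: B) && (i \in C)].

Definition is_min (x : T) (A : {set T}) : bool :=
  (x \in A) && [forall y in A, (x <= y)%N].

Definition IA Bs B : {set T} := [set i in B | is_min i (fundCocircuit Bs B i)].
Definition EA Bs B : {set T} := [set i in ~: B | is_min i (fundCircuit Bs B i)].

Definition nbc_basis Bs B : bool := (B \in Bs) && (EA Bs B == set0).

Definition remove_min (A : {set T}) : {set T} := A :\: [set x | is_min x A].

Definition biflat Bs (FG : {set T} * {set T}) : bool :=
  let: (F, G) := FG in
  [&& flat Bs F, flat (dualB Bs) G, F != set0, G != set0,
      ~~ ((F == setT) && (G == setT)) & F :|: G == setT].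

Definition compatible (FG FG' : {set T} * {set T}) : bool :=
  let: (F, G) := FG in let: (F', G') := FG' in
  ((F \subset F') && (G' \subset G)) || ((F' \subset F) && (G \subset G')).

Definition biflag Bs (s : seq ({set T} * {set T})) : bool :=
  [&& all (biflat Bs) s, all2rel compatible s &
      \bigcup_(FG <- s) (FG.1 :&: FG.2) != setT].

(* e_1 > ... > e_{r-k} (elements of B - IA(B)) followed by
   e_{r-k+1} < ... < e_{n-k-1} (elements of (E-B) - min(E-B)) *)
Definition nbc_seq Bs B : seq T :=
  sort (fun x y : T => (y <= x)%N) (enum (B :\: IA Bs B)) ++
  sort (fun x y : T => (x <= y)%N) (enum (remove_min (~: B))).

(* F_j | G_j, for 1 <= j <= n-k-1 *)
Definition nbc_pair Bs B (r k j : nat) : {set T} * {set T} :=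
  if (j <= r - k)%N then (cl Bs [set x in take j (nbc_seq Bs B)], setT)
  else (setT, cl (dualB Bs) [set x in drop j.-1 (nbc_seq Bs B)]).

Definition nbc_biflag Bs B (n r k : nat) : seq ({set T} * {set T}) :=
  [seq nbc_pair Bs B r k j | j <- iota 1 (n - k - 1)].

End Matroid.

(* Main.v *)
Require Import Defs.
From mathcomp Require Import all_boot all_order.
From mathcomp Require Import zify.
Set Implicit Arguments. Unset Strict Implicit. Unset Printing Implicit Defensive.

Section Gen.
Variable N : nat.
Local Notation T := 'I_N.
Variable Bs : {set {set T}}.
Implicit Types (I J K X Y Z C D B : {set T}).

Lemma indepP I : reflect (exists2 B, B \in Bs & I \subset B) (indep Bs I).
Proof. exact: exists_inP. Qed.

Lemma indep_sub I J : J \subset I -> indep Bs I -> indep Bs J.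
Proof. move=> HJ /indepP[B HB HIB]; apply/indepP; exists B => //; exact: subset_trans HIB. Qed.

Lemma sub_cl X : X \subset cl Bs X.
Proof.
apply/subsetP => e eX; rewrite inE; apply/eqP; congr rank.
by apply/setUidPr; rewrite sub1set.
Qed.

Lemma rank_ge K X : indep Bs K -> K \subset X -> #|K| <= rank Bs X.
Proof.
move=> HK HKX; rewrite /rank.
by apply: (@leq_bigmax_cond _ (fun I : {set T} => indep Bs I && (I \subset X)) (fun I : {set T} => #|I|) K); rewrite HK HKX.
Qed.

Lemma rank_ex X : Bs != set0 -> exists2 K, indep Bs K && (K \subset X) & #|K| = rank Bs X.
Proof.
move=> /set0Pn[B0 HB0].
have H0 : 0 < #|[pred I : {set T} | indep Bs I && (I \subset X)]|.
  apply/card_gt0P; exists set0; rewrite inE sub0set andbT.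
  by apply/indepP; exists B0; rewrite ?sub0set.
case: (eq_bigmax_cond (fun I : {set T} => #|I|) H0) => K HK HE.
by exists K; [move: HK; rewrite inE | rewrite /rank -HE].
Qed.

Lemma circuit_ex Z e : indep Bs Z -> ~~ indep Bs (e |: Z) ->
  exists C, [&& circuit Bs C, C \subset e |: Z & e \in C].
Proof.
move=> HZ HeZ.
have P0 : (fun D : {set T} => (D \subset e |: Z) && ~~ indep Bs D) (e |: Z).
  by rewrite subxx.
case: (@arg_minnP _ (e |: Z) (fun D : {set T} => (D \subset e |: Z) && ~~ indep Bs D) (fun D : {set T} => #|D|) P0) => C /andP[HCs HCd] Hmin.
exists C; apply/and3P; split => //.
- rewrite /circuit HCd /=; apply/forallP => D; apply/implyP => HD.
  apply: contraT => HDd.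
  have := Hmin D; rewrite HDd andbT (subset_trans (proper_sub HD) HCs) => /(_ isT).
  by rewrite leqNgt (proper_card HD).
- apply: contraT => HeC; suff : indep Bs C by rewrite (negbTE HCd).
  apply: indep_sub HZ; apply/subsetP => x xC.
  move/subsetP: HCs => /(_ x xC) /setU1P[Hx|//].
  by move: HeC; rewrite -Hx xC.
Qed.

Lemma fund_spec Z e : indep Bs Z -> ~~ indep Bs (e |: Z) ->
  [&& circuit Bs (fundCircuit Bs Z e), fundCircuit Bs Z e \subset e |: Z &
      e \in fundCircuit Bs Z e].
Proof.
move=> HZ HeZ; rewrite /fundCircuit; case: pickP => [C /andP[/andP[H1 H2] H3]|Hn] /=.
  by rewrite H1 H2 H3.
case: (circuit_ex HZ HeZ) => C /and3P[H1 H2 H3].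
by move: (Hn C); rewrite H1 H2 H3.
Qed.

Lemma circuit_indep C y : circuit Bs C -> y \in C -> indep Bs (C :\ y).
Proof.
move=> /andP[_ /forallP H] yC; move: (H (C :\ y)); rewrite properD1 //.
Qed.

Lemma circuit_dep C : circuit Bs C -> ~~ indep Bs C.
Proof. by case/andP. Qed.

Section Mat.
Hypothesis HM : is_matroid Bs.
Variable d : nat.
Hypothesis Hd : forall B, B \in Bs -> #|B| = d.

Lemma Bs_ne0 : Bs != set0. Proof. by case: HM. Qed.

Lemma indep_card I : indep Bs I -> #|I| <= d.
Proof. by move=> /indepP[B HB HIB]; rewrite -(Hd HB) subset_leq_card. Qed.

Lemma augment I J : indep Bs I -> indep Bs J -> #|I| < #|J| ->
  exists2 x, x \in J :\: I & indep Bs (x |: I).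
Proof.
move=> HI HJ Hlt.
case: (boolP [exists x in J :\: I, indep Bs (x |: I)]) => [/exists_inP[x ? ?]|/exists_inPn Hno].
  by exists x.
exfalso.
case/indepP: HI => B0 HB0 HIB0; case/indepP: HJ => B0' HB0' HJB0'.
pose P := fun p : {set T} * {set T} => [&& p.1 \in Bs, p.2 \in Bs, I \subset p.1 & J \subset p.2].
have P0 : P (B0, B0') by rewrite /P /= HB0 HB0' HIB0 HJB0'.
case: (@arg_maxnP _ (B0, B0') P (fun p : {set T} * {set T} => #|p.1 :&: p.2|) P0) => [[B B']] /and4P[/= HB HB' HIB HJB'] Hmax.
have C1 : forall x, x \in J :\: I -> x \notin B.
  move=> x Hx; apply: contraT; rewrite negbK => xB.
  suff : indep Bs (x |: I) by rewrite (negbTE (Hno x Hx)).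
  apply/indepP; exists B => //.
  by rewrite subUset sub1set xB HIB.
have C2 : B \subset I :|: B'.
  apply/subsetP => x xB; rewrite inE; case: (boolP (x \in I)) => //= xI.
  apply: contraT => xB'.
  have xBB : x \in B :\: B' by rewrite inE xB xB'.
  have [y /setDP[yB' yB] Hex] := HM.2 B B' HB HB' x xBB.
  have := Hmax (y |: (B :\ x), B'); rewrite /P /= Hex HB' HJB' /=.
  have -> : I \subset y |: (B :\ x).
    apply/subsetP => z zI; rewrite !inE; apply/orP; right; apply/andP; split.
      by apply: contraNneq xI => <-.
    exact: (subsetP HIB).
  move=> /(_ isT); rewrite leqNgt => /negP Hc; exfalso; apply: Hc; apply: proper_card; apply/properP; split.
    apply/subsetP => z; rewrite !inE => /andP[zB zB']; rewrite zB zB' !andbT.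
    by apply/orP; right; apply: contraNneq xB' => <-.
  exists y; rewrite !inE ?eqxx ?yB' //=; by rewrite (negbTE yB).
set D := J :\: I.
have DB' : D \subset B' by apply: subset_trans HJB'; apply: subsetDl.
have S1 : B \subset (I :\: B') :|: (B' :\: D).
  apply/subsetP => x xB; move/subsetP: C2 => /(_ x xB); rewrite !in_setU !in_setD.
  case: (boolP (x \in B')) => xB' /=.
    move=> _; rewrite andbT; apply/negP => /andP[xI xJ].
    by have := C1 x; rewrite in_setD xI xJ xB => /(_ isT).
  by rewrite !andbF !orbF.
have e1 := subset_leq_card S1.
have e2 : #|(I :\: B') :|: (B' :\: D)| <= #|I :\: B'| + #|B' :\: D| by rewrite cardsU leq_subr.
have e3 := cardsID D B'.
have e4 : B' :&: D = D by apply/setIidPr.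
have e5 : #|I :\: B'| <= #|I :\: J| by apply: subset_leq_card; apply: setDS.
have e6 := cardsID I J. have e7 := cardsID J I. have e8 : I :&: J = J :&: I by rewrite setIC.
have e9 := Hd HB. have e10 := Hd HB'.
rewrite e4 in e3. rewrite e8 in e7. rewrite -/D in e6.
move: e1 e2 e3 e5 e6 e7 e9 e10 Hlt.
move: #|B| #|B'| #|D| #|I| #|J| #|I :\: J| #|I :\: B'| #|B' :\: D| #|J :&: I| #|(I :\: B') :|: (B' :\: D)|.
clear -d; move=> *; lia.
Qed.

Lemma extend I K Y : indep Bs I -> I \subset Y -> indep Bs K -> K \subset Y ->
  exists J, [/\ indep Bs J, I \subset J, J \subset Y & #|K| <= #|J|].
Proof.
move=> HI HIY HK HKY.
have P0 : (fun J => [&& indep Bs J, I \subset J & J \subset Y]) I by rewrite HI subxx HIY.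
case: (@arg_maxnP _ I (fun J : {set T} => [&& indep Bs J, I \subset J & J \subset Y]) (fun J : {set T} => #|J|) P0) => J /and3P[HJ HIJ HJY] Hmax.
exists J; split => //; rewrite leqNgt; apply/negP => Hlt.
have [x /setDP[xK xJ] Hx] := augment HJ HK Hlt.
have := Hmax (x |: J); rewrite Hx (subset_trans HIJ (subsetUr _ _)) subUset sub1set (subsetP HKY x xK) HJY.
by move=> /(_ isT); rewrite /geq cardsU1 xJ /= ltnn.
Qed.

Lemma indep_basis J : indep Bs J -> d <= #|J| -> J \in Bs.
Proof.
move=> /indepP[B HB HJB] Hc.
suff -> : J = B by [].
by apply/eqP; rewrite eqEcard HJB (Hd HB).
Qed.

Lemma circuit_exch B0 e C y : B0 \in Bs -> e \notin B0 -> ~~ indep Bs C ->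
  C \subset e |: B0 -> indep Bs (C :\ y) -> y \in C -> y != e ->
  e |: (B0 :\ y) \in Bs.
Proof.
move=> HB0 eB0 HC HCs HCy yC ye.
have yB0 : y \in B0 by move/subsetP: HCs => /(_ y yC) /setU1P[/eqP|//]; rewrite (negbTE ye).
have HB0i : indep Bs B0 by apply/indepP; exists B0.
have [J [HJ HCJ HJY HcJ]] := extend HCy (subset_trans (subD1set _ _) HCs) HB0i (subsetUr _ _).
have yJ : y \notin J.
  apply: contraT; rewrite negbK => yJ; suff : indep Bs C by rewrite (negbTE HC).
  apply: indep_sub HJ; apply/subsetP => z zC; case: (eqVneq z y) => [->//|zy].
  by apply: (subsetP HCJ); rewrite !inE zy.
have HJK : J \subset e |: (B0 :\ y).
  apply/subsetP => z zJ; rewrite !inE; move/subsetP: HJY => /(_ z zJ); rewrite !inE.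
  case: (eqVneq z e) => //= _ ->; rewrite andbT; by apply: contraNneq yJ => <-.
have HcK : #|e |: (B0 :\ y)| = d.
  by rewrite cardsU1 !inE (negbTE eB0) andbF -(Hd HB0) (cardsD1 y B0) yB0.
have -> : e |: (B0 :\ y) = J.
  by apply/esym/eqP; rewrite eqEcard HJK HcK -(Hd HB0).
by apply: indep_basis => //; rewrite -(Hd HB0).
Qed.

Lemma rank_mono X Y : X \subset Y -> rank Bs X <= rank Bs Y.
Proof.
move=> HXY; have [K /andP[HK HKX] <-] := rank_ex X Bs_ne0.
exact: rank_ge HK (subset_trans HKX HXY).
Qed.

Lemma cl_basis X I : indep Bs I -> I \subset X -> #|I| = rank Bs X ->
  forall e, (e \in cl Bs X) = (e \in I) || ~~ indep Bs (e |: I).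
Proof.
move=> HI HIX Hr e; rewrite inE; apply/eqP/idP.
  move=> Hr'; apply: contraT; rewrite negb_or negbK => /andP[eI HeI].
  by have := rank_ge HeI (setUS [set e] HIX); rewrite Hr' -Hr cardsU1 eI /= ltnn.
move=> H; apply/eqP; rewrite eqn_leq (rank_mono (subsetUr [set e] X)) andbT.
have [K /andP[HK HKX] <-] := rank_ex (e |: X) Bs_ne0.
rewrite -Hr leqNgt; apply/negP => Hlt.
have [x /setDP[xK xI] Hx] := augment HI HK Hlt.
move/subsetP: HKX => /(_ x xK) /setU1P[Hxe|xX].
  by move: H; rewrite -Hxe (negbTE xI) Hx.
have := rank_ge Hx (_ : x |: I \subset X); rewrite subUset sub1set xX HIX => /(_ isT).
by rewrite -Hr cardsU1 xI ltnn.
Qed.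

Lemma cl_idem X : cl Bs (cl Bs X) = cl Bs X.
Proof.
have [I /andP[HI HIX] Hr] := rank_ex X Bs_ne0.
have HIc : I \subset cl Bs X := subset_trans HIX (sub_cl X).
have Hrc : #|I| = rank Bs (cl Bs X).
  apply/eqP; rewrite eqn_leq rank_ge //=.
  have [K /andP[HK HKX] <-] := rank_ex (cl Bs X) Bs_ne0.
  rewrite leqNgt; apply/negP => Hlt.
  have [x /setDP[xK xI] Hx] := augment HI HK Hlt.
  by move: (subsetP HKX x xK); rewrite (cl_basis HI HIX Hr) (negbTE xI) Hx.
by apply/setP => e; rewrite (cl_basis HI HIc Hrc) (cl_basis HI HIX Hr).
Qed.

Lemma flat_cl X : flat Bs (cl Bs X).
Proof. by rewrite /flat cl_idem. Qed.

Lemma cl_mono X Y : X \subset Y -> cl Bs X \subset cl Bs Y.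
Proof.
move=> HXY.
have [I /andP[HI HIX] Hr] := rank_ex X Bs_ne0.
have [K /andP[HK HKY] HrK] := rank_ex Y Bs_ne0.
have [J [HJ HIJ HJY HcJ]] := extend HI (subset_trans HIX HXY) HK HKY.
have HrJ : #|J| = rank Bs Y by apply/eqP; rewrite eqn_leq rank_ge // -HrK HcJ.
apply/subsetP => e; rewrite (cl_basis HI HIX Hr) (cl_basis HJ HJY HrJ).
case/orP => [eI|Hdep]; first by rewrite (subsetP HIJ e eI).
case: (boolP (e \in J)) => //= _; apply: contra Hdep; apply: indep_sub.
exact: setUS.
Qed.

Lemma notin_cl X e : indep Bs (e |: X) -> e \notin X -> e \notin cl Bs X.
Proof.
move=> HeX eX.
have HX : indep Bs X := indep_sub (subsetUr _ _) HeX.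
have Hr : #|X| = rank Bs X.
  apply/eqP; rewrite eqn_leq rank_ge //=.
  have [K /andP[HK HKX] <-] := rank_ex X Bs_ne0.
  exact: subset_leq_card.
by rewrite (cl_basis HX (subxx _) Hr) (negbTE eX) HeX.
Qed.

Lemma memdual X : (X \in dualB Bs) = (~: X \in Bs).
Proof.
apply/imsetP/idP => [[B HB ->]|H]; first by rewrite setCK.
by exists (~: X); rewrite ?setCK.
Qed.

Lemma dual_matroid : is_matroid (dualB Bs).
Proof.
split.
  case/set0Pn: Bs_ne0 => B HB; apply/set0Pn; exists (~: B); exact: imset_f.
move=> _ _ /imsetP[B1 HB1 ->] /imsetP[B2 HB2 ->] x; rewrite !inE negbK => /andP[xB2 xB1].
have HxB1 : ~~ indep Bs (x |: B1).
  by apply/negP => /indep_card; rewrite cardsU1 xB1 (Hd HB1) /= ltnn.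
have HB1i : indep Bs B1 by apply/indepP; exists B1.
have [C /and3P[HC HCs xC]] := circuit_ex HB1i HxB1.
have : ~~ (C \subset B2).
  apply/negP => HCB2; suff : indep Bs C by rewrite (negbTE (circuit_dep HC)).
  by apply/indepP; exists B2.
case/subsetPn => y yC yB2.
have yx : y != x by apply: contraNneq yB2 => ->.
have yB1 : y \in B1 by move/subsetP: HCs => /(_ y yC) /setU1P[/eqP|//]; rewrite (negbTE yx).
have Hex := circuit_exch HB1 xB1 (circuit_dep HC) HCs (circuit_indep HC yC) yC yx.
exists y; first by rewrite !inE yB2 yB1.
rewrite memdual; suff -> : ~: (y |: (~: B1 :\ x)) = x |: (B1 :\ y) by [].
apply/setP => z; rewrite !inE.
case: (eqVneq z y) => [->|zy]; first by rewrite yB1 /= (negbTE yx).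
case: (eqVneq z x) => [->|zx] //=; by rewrite ?xB1 // negbK.
Qed.

Lemma dual_card B : B \in dualB Bs -> #|B| = N - d.
Proof.
rewrite memdual => HB; have := cardsC (~: B); rewrite setCK card_ord (Hd HB).
move: #|B| => b h; clear -h; lia.
Qed.

End Mat.
End Gen.

Lemma flatT N (Bs : {set {set 'I_N}}) : flat Bs setT.
Proof. by rewrite /flat eqEsubset subsetT sub_cl. Qed.

Unset Implicit Arguments. Set Strict Implicit.
Section Arith.
Local Set Implicit Arguments. Local Unset Strict Implicit.
Lemma A1 r x : r.+1 = true + x -> r.+1 <= x -> False. Proof. lia. Qed.
Lemma A2 n r b : r.+1 + b = n.+1 -> b = n - r. Proof. lia. Qed.
Lemma A3 n r : 0 < n - r -> r < n. Proof. lia. Qed.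
Lemma A4 n r b : n - r = true + b -> b = n - r - 1. Proof. lia. Qed.
Lemma A5 n r k : k <= r -> r < n -> r - k + (n - r - 1) = n - k - 1. Proof. lia. Qed.
Lemma A6 n r k j : 0 < j -> j <= r - k -> k <= r -> r < n -> 0 < (if j < n - k - 1 then j else n - k - 1).
Proof. case: ifP; lia. Qed.
Lemma A7 r k j : r - k < j -> (j.-1 < r - k) = false. Proof. move=> H; apply/negbTE; rewrite -leqNgt; lia. Qed.
Lemma A8 n k r j : r - k < j -> j <= n - k - 1 -> 0 < n - k - 1 - j.-1. Proof. lia. Qed.
Lemma A9 j j' : j <= j' -> j.-1 <= j'.-1. Proof. lia. Qed.
Lemma A10 n k j : j < 1 + (n - k - 1) -> j <= n - k - 1. Proof. lia. Qed.
End Arith.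

Theorem mainTheorem4 (n r : nat) (Bs : {set {set 'I_n.+1}})
  (HM : is_matroid Bs)
  (Hloop : forall e, ~~ is_loop Bs e)
  (Hcoloop : forall e, ~~ is_coloop Bs e)
  (Hrank : forall B, B \in Bs -> #|B| = r.+1)
  (B : {set 'I_n.+1}) (HB : nbc_basis Bs B)
  (k : nat) (Hk : #|IA Bs B| = k.+1) :
  biflag Bs (nbc_biflag Bs B n r k).
Proof.
have HMd := dual_matroid HM Hrank.
have Hdd := dual_card Hrank.
case/andP: HB => HBB /eqP HEA.
have /set0Pn[m0 Hm0] : ~: B != set0.
  apply/negP => /eqP H0.
  have HBT : B = setT by rewrite -(setCK B) H0 setC0.
  move: (Hcoloop ord0); rewrite /is_coloop => /forall_inPn [B' HB' HnB'].
  have HB'T : B' = setT.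
    by apply/eqP; rewrite eqEcard subsetT (Hrank _ HB') -(Hrank _ HBB) HBT leqnn.
  by rewrite HB'T inE in HnB'.
case: (@arg_minnP _ m0 (fun x => x \in ~: B) (fun x : 'I_n.+1 => nat_of_ord x) Hm0) => m Hm Hmmin.
have Hism : forall x, x \in ~: B -> is_min x (~: B) = (x == m).
  move=> x Hx; apply/idP/eqP => [/andP[_ /forall_inP H]|->].
    by apply/val_inj/eqP; rewrite eqn_leq (H m Hm) (Hmmin x Hx).
  by rewrite /is_min Hm; apply/forall_inP => y Hy; exact: Hmmin.
have Hrm : remove_min (~: B) = ~: B :\ m.
  apply/setP => x; rewrite /remove_min !inE.
  case: (boolP (x \in B)) => xB; first by rewrite !andbF.
  have xB' : x \in ~: B by rewrite inE xB.
  by rewrite (Hism x xB').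
have mB : m \notin B by move: Hm; rewrite inE.
have HBi : indep Bs B by apply/indepP; exists B.
have HBm : ~~ indep Bs (m |: B).
  by apply/negP => /(indep_card Hrank); rewrite cardsU1 mB (Hrank _ HBB) /= ltnn.
have /and3P[HCc HCs mC] := fund_spec HBi HBm.
have : m \notin EA Bs B by rewrite HEA inE.
rewrite inE Hm /= /is_min mC /= => /forall_inPn [c cC Hc].
rewrite -ltnNge in Hc.
have cm : c != m by apply: contraTneq Hc => ->; rewrite ltnn.
have cB : c \in B.
  by move/subsetP: HCs => /(_ c cC) /setU1P[/eqP|//]; rewrite (negbTE cm).
have Hex := circuit_exch HM Hrank HBB mB (circuit_dep HCc) HCs (circuit_indep HCc cC) cC cm.
have HdBi : indep (dualB Bs) (~: B).
  by apply/indepP; exists (~: B); rewrite ?imset_f ?subxx.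
have HdBc : ~~ indep (dualB Bs) (c |: ~: B).
  apply/negP => /indepP [B' HB' Hs].
  move: HB'; rewrite memdual => HB'.
  have : ~: B' \subset B :\ c.
    apply/subsetP => z; rewrite !inE => zB'.
    case: (eqVneq z c) => [Hzc|zc] /=.
      by move: zB'; rewrite Hzc (subsetP Hs c) // !inE eqxx.
    apply: contraR zB' => zB; apply: (subsetP Hs); by rewrite !inE zB orbT.
  move/subset_leq_card; rewrite (Hrank _ HB'); have := cardsD1 c B; rewrite cB (Hrank _ HBB).
  move: #|B :\ c| => x; exact: A1.
have /and3P[HC'c HC's cC'] := fund_spec HdBi HdBc.
have cIA : c \in IA Bs B.
  rewrite inE cB /=. change (is_min c (fundCircuit (dualB Bs) (~: B) c)).
  rewrite /is_min cC' /=; apply/forall_inP => z zC'.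
  move/subsetP: HC's => /(_ z zC') /setU1P[->|zB]; first exact: leqnn.
  exact: leq_trans (ltnW Hc) (Hmmin z zB).
pose s1 := sort (fun x y : 'I_n.+1 => (y <= x)%N) (enum (B :\: IA Bs B)).
pose s2 := sort (fun x y : 'I_n.+1 => (x <= y)%N) (enum (remove_min (~: B))).
have Hseq : nbc_seq Bs B = s1 ++ s2 by [].
have mem1 x : (x \in s1) = (x \in B :\: IA Bs B) by rewrite mem_sort mem_enum.
have mem2 x : (x \in s2) = (x \in ~: B :\ m) by rewrite mem_sort mem_enum Hrm.
have IAB : IA Bs B \subset B by apply/subsetP => x; rewrite inE => /andP[].
have sz1 : size s1 = r - k.
  by rewrite size_sort -cardE cardsD (setIidPr IAB) Hk (Hrank _ HBB) subSS.
have kr : k <= r by have := subset_leq_card IAB; rewrite Hk (Hrank _ HBB).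
have szB' : #|~: B| = n - r.
  have := cardsC B; rewrite card_ord (Hrank _ HBB). exact: A2.
have rn : r < n.
  have : 0 < #|~: B| by apply/card_gt0P; exists m.
  rewrite szB'; exact: A3.
have sz2 : size s2 = n - r - 1.
  rewrite size_sort -cardE. have := cardsD1 m (~: B); rewrite Hm szB'.
  rewrite Hrm; exact: A4.
have szs : size (nbc_seq Bs B) = n - k - 1.
  rewrite Hseq size_cat sz1 sz2. exact: (A5 kr rn).
pose XF j := [set x in take j (nbc_seq Bs B)].
pose YG j := [set x in drop j.-1 (nbc_seq Bs B)].
have XFsub j : j <= r - k -> XF j \subset B :\ c.
  move=> Hj; apply/subsetP => x; rewrite inE Hseq takel_cat ?sz1 // => /mem_take.
  rewrite mem1 in_setD => /andP[xIA xB]; rewrite in_setD1 xB andbT.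
  by apply: contraNneq xIA => ->.
have XFne j : 0 < j -> j <= r - k -> XF j != set0.
  move=> j0 Hj; apply/set0Pn.
  have : 0 < size (take j (nbc_seq Bs B)) by rewrite size_take szs; exact: (A6 j0 Hj kr rn).
  rewrite /XF; case: (take j (nbc_seq Bs B)) => [|x t] //= _; exists x; by rewrite inE mem_head.
have YGsub j : r - k < j -> YG j \subset ~: B :\ m.
  move=> Hj; apply/subsetP => x; rewrite inE Hseq drop_cat sz1.
  rewrite ifF; last exact: (A7 Hj).
  by move=> /mem_drop; rewrite mem2.
have YGne j : r - k < j -> j <= n - k - 1 -> YG j != set0.
  move=> j0 Hj; apply/set0Pn.
  have : 0 < size (drop j.-1 (nbc_seq Bs B)) by rewrite size_drop szs; exact: (A8 j0 Hj).
  rewrite /YG; case: (drop j.-1 (nbc_seq Bs B)) => [|x t] //= _; exists x; by rewrite inE mem_head.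
have HFmain j : 0 < j -> j <= r - k ->
    [/\ flat Bs (cl Bs (XF j)), cl Bs (XF j) != set0 & m \notin cl Bs (XF j)].
  move=> j0 Hj; split.
  - exact: (flat_cl HM Hrank).
  - case/set0Pn: (XFne j j0 Hj) => x xX; apply/set0Pn; exists x.
    exact: (subsetP (sub_cl Bs (XF j)) x xX).
  - apply: (notin_cl HM Hrank).
      apply/indepP; exists (m |: (B :\ c)) => //; exact: setUS (XFsub j Hj).
    apply: contra mB => mX; move: (subsetP (XFsub j Hj) m mX); rewrite in_setD1 => /andP[].
    by [].
have HGmain j : r - k < j -> j <= n - k - 1 ->
    [/\ flat (dualB Bs) (cl (dualB Bs) (YG j)), cl (dualB Bs) (YG j) != set0
      & m \notin cl (dualB Bs) (YG j)].
  move=> j0 Hj; split.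
  - exact: (flat_cl HMd Hdd).
  - case/set0Pn: (YGne j j0 Hj) => x xX; apply/set0Pn; exists x.
    exact: (subsetP (sub_cl (dualB Bs) (YG j)) x xX).
  - apply: (notin_cl HMd Hdd).
      apply/indepP; exists (~: B); first exact: imset_f.
      rewrite subUset sub1set Hm; apply: subset_trans (YGsub j j0) _; exact: subD1set.
    apply/negP => mY; move: (subsetP (YGsub j j0) m mY); rewrite in_setD1 eqxx.
    by [].
have XFmono j j' : j <= j' -> cl Bs (XF j) \subset cl Bs (XF j').
  move=> H; apply: (cl_mono HM Hrank); apply/subsetP => x; rewrite !inE.
  by rewrite -(take_takel (nbc_seq Bs B) H) => /mem_take.
have YGmono j j' : j <= j' -> cl (dualB Bs) (YG j') \subset cl (dualB Bs) (YG j).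
  move=> H; apply: (cl_mono HMd Hdd); apply/subsetP => x; rewrite !inE.
  have -> : drop j'.-1 (nbc_seq Bs B) = drop (j'.-1 - j.-1) (drop j.-1 (nbc_seq Bs B)).
    by rewrite drop_drop subnK //; exact: A9.
  by move=> /mem_drop.
have TT : [set: 'I_n.+1] != set0 by apply/set0Pn; exists m; rewrite inE.
rewrite /biflag /nbc_biflag; apply/and3P; split.
- apply/allP => FG /mapP[j]; rewrite mem_iota => /andP[j1 j2] ->.
  rewrite /nbc_pair; case: ifP => Hj.
  + have [Hf Hne Hmn] := HFmain j j1 Hj.
    have HnT : cl Bs (XF j) != setT by apply: contraNneq Hmn => ->; rewrite inE.
    by rewrite /biflat Hf flatT Hne TT eqxx andbT HnT setUT eqxx.
  + have Hj' : r - k < j by rewrite ltnNge Hj.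
    have [Hf Hne Hmn] := HGmain j Hj' (A10 j2).
    have HnT : cl (dualB Bs) (YG j) != setT by apply: contraNneq Hmn => ->; rewrite inE.
    by rewrite /biflat Hf flatT Hne TT eqxx HnT setTU eqxx.
- apply/allrelP => FG FG' /mapP[j]; rewrite mem_iota => /andP[j1 j2] -> /mapP[j'].
  rewrite mem_iota => /andP[j1' j2'] ->.
  rewrite /nbc_pair /compatible; case: ifP => Hj; case: ifP => Hj'; rewrite ?subsetT /= ?orbT //.
  + by rewrite !andbT; case: (leqP j j') => H; [rewrite (XFmono _ _ H) | rewrite (XFmono _ _ (ltnW H)) orbT].
  + by rewrite ?andbT; case: (leqP j j') => H; [rewrite (YGmono _ _ H) | rewrite (YGmono _ _ (ltnW H)) orbT].
- rewrite big_map big_seq.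
  match goal with |- is_true (~~ (?U == _)) => suff HU : m \notin U by apply: contraNneq HU => ->; rewrite inE end.
  apply: (@big_ind _ (fun A : {set 'I_n.+1} => is_true (m \notin A))).
  + by rewrite inE.
  + by move=> A A' HA HA'; rewrite inE negb_or HA HA'.
  + move=> j; rewrite mem_iota => /andP[j1 j2]; rewrite /nbc_pair; case: ifP => Hj /=.
      by rewrite setIT; case: (HFmain j j1 Hj).
    have Hj' : r - k < j by rewrite ltnNge Hj.
    by rewrite setTI; case: (HGmain j Hj' (A10 j2)).
Qed.
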